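(* Let $N\in\mathbb N$, $\sigma>0$, $\theta,\gamma\ge0$, let $H^N$ be a stochastic process with the dynamics described in the context and for $x>0$ let $S^N_x=\inf\{s:\Lambda^N_s(0)\ge\lfloor Nx\rfloor/N\}$. Then $S^N_x\to\infty$ almost surely as $x\to\infty$.
   Context: $H^N=(H^N_s)_{s\ge0}$ is continuous, piecewise linear with slopes $\pm2N$, starts at $0$ with slope $2N$; while moving upwards its slope jumps from $2N$ to $-2N$ at rate $N^2\sigma^2+4\gamma N\Lambda^N_s(H^N_s)$; while moving downwards its slope jumps from $-2N$ to $2N$ at rate $N^2\sigma^2+2N\theta$; whenever it reaches $0$ it is reflected above $0$. $\Lambda^N_s(t)$ is $\frac1{2N}$ times the number of $t$-crossings of $H^N$ between times $0$ and $s$, a local minimum at level $t$ counting as two crossings and a local maximum as none. *)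

(* Defs.v *)
From HB Require Import structures.
From mathcomp Require Import all_boot all_order all_algebra.
From mathcomp Require Import all_classical all_reals all_analysis.
Set Implicit Arguments. Unset Strict Implicit. Unset Printing Implicit Defensive.
Import Order.TTheory GRing.Theory Num.Theory.
Import numFieldNormedType.Exports.
Local Open Scope classical_set_scope.
Local Open Scope ring_scope.

(* A path of H^N is encoded by its sequence of slope-change times
   tau 0 = 0 < tau 1 < tau 2 < ...  On [tau k, tau k.+1] the slope is
   +2N if k is even and -2N if k is odd (H starts upwards; every slope
   change, including a reflection at 0, switches the direction). *)

Definition slope {R : realType} (N : nat) (k : nat) : R :=
  if odd k then - (2 * N%:R) else 2 * N%:R.

Fixpoint height {R : realType} (N : nat) (tau : nat -> R) (k : nat) : R :=
  match k with
  | 0 => 0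
  | k'.+1 => height N tau k' + slope N k' * (tau k' .+1 - tau k')
  end.

Definition seg {R : realType} (N : nat) (tau : nat -> R) (k : nat) (s : R) : R :=
  height N tau k + slope N k * (s - tau k).

(* Number of t-crossings, strictly before time s (and after time 0), made
   during the first n segments: a point r in the open interior of a
   segment with H r = t counts 1; a turning point at level t counts 2 if
   it is a local minimum (end of a downward segment, i.e. k odd) and 0 if
   it is a local maximum. *)
Definition crossings {R : realType} (N : nat) (tau : nat -> R) (n : nat)
    (s t : R) : nat :=
  \sum_(k < n)
    ((`[< exists r : R, (tau k < r < tau k.+1)%R /\ (r < s)%R /\ seg N tau k r = t >] : nat)
     + (if [&& odd k, (tau k.+1 < s)%R & height N tau k.+1 == t] then 2 else 0))%N.

Definition Lambda {R : realType} (N : nat) (tau : nat -> R) (s t : R) : \bar R :=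
  ereal_sup (range (fun n : nat => ((crossings N tau n s t)%:R / (2 * N%:R))%:E)).

Definition up_rate {R : realType} (N : nat) (sigma gamma : R) (tau : nat -> R)
    (k : nat) (s : R) : \bar R :=
  ((N%:R ^+ 2 * sigma ^+ 2)%:E + (4 * gamma * N%:R)%:E * Lambda N tau s (seg N tau k s))%E.

(* Pathwise construction of H^N from a sequence e of (i.i.d. Exp(1))
   clocks: the k-th segment uses clock e k.  An upward segment ends when
   the integrated switching rate reaches e k; a downward segment (constant
   switching rate N^2 sigma^2 + 2 N theta) ends either when its integrated
   rate reaches e k or when H reaches 0 (reflection), whichever is first. *)
Definition contour_dyn {R : realType} (N : nat) (sigma theta gamma : R)
    (e : nat -> R) (tau : nat -> R) : Prop :=
  [/\ tau 0 = 0,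
      (forall k, tau k < tau k.+1),
      (forall k, ~~ odd k ->
         (\int[lebesgue_measure]_(s in `[tau k, tau k.+1])
             up_rate N sigma gamma tau k s = (e k)%:E)%E) &
      (forall k, odd k ->
         tau k.+1 = tau k + Num.min (height N tau k / (2 * N%:R))
                                    (e k / (N%:R ^+ 2 * sigma ^+ 2 + 2 * N%:R * theta)))].

(* S^N_x = inf { s >= 0 : Lambda_s(0) >= floor(N x) / N }  (inf set0 = +oo) *)
Definition S_time {R : realType} (N : nat) (tau : nat -> R) (x : R) : \bar R :=
  ereal_inf [set s%:E | s in [set s : R | 0 <= s /\
     (((Num.floor (N%:R * x))%:~R / N%:R)%:E <= Lambda N tau s 0)%E]].

Definition indep_seq {R : realType} d (T : measurableType d)
    (P : probability T R) (X : nat -> T -> R) : Prop :=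
  forall (n : nat) (B : nat -> set R), (forall i, measurable (B i)) ->
    P (\bigcap_(i in `I_n) (X i @^-1` B i)) = (\prod_(i < n) P (X i @^-1` B i))%E.

(* Main.v *)
Require Import Defs.
From HB Require Import structures.
From mathcomp Require Import all_boot all_order all_algebra.
From mathcomp Require Import all_classical all_reals all_analysis.
From mathcomp Require Import ring lra zify.
Import Order.TTheory GRing.Theory Num.Theory.
Import numFieldNormedType.Exports.
Local Open Scope classical_set_scope.
Local Open Scope ring_scope.
Set Implicit Arguments. Unset Strict Implicit. Unset Printing Implicit Defensive.

Lemma tau_le (R : realType) (tau : nat -> R) :
  (forall k, tau k < tau k.+1) -> forall j k, (j <= k)%N -> tau j <= tau k.
Proof.
move=> h j k /subnK <-; elim: (k - j)%N => [|m IH]; first by rewrite add0n.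
by rewrite addSn (le_trans IH) // ltW.
Qed.

Lemma tau_lt (R : realType) (tau : nat -> R) :
  (forall k, tau k < tau k.+1) -> forall j k, (j < k)%N -> tau j < tau k.
Proof. by move=> h j k jk; rewrite (lt_le_trans (h j)) // tau_le. Qed.

Lemma crossings_le (R : realType) N (tau : nat -> R) n s t K :
  (forall k, tau k < tau k.+1) -> s <= tau K -> (crossings N tau n s t <= 3 * K)%N.
Proof.
move=> h sK; rewrite /crossings.
have term : forall j : nat,
   ((`[< exists r : R, (tau j < r < tau j.+1)%R /\ (r < s)%R /\ seg N tau j r = t >] : nat)
     + (if [&& odd j, (tau j.+1 < s)%R & height N tau j.+1 == t] then 2 else 0) <=
    if (j < K)%N then 3 else 0)%N.
  move=> j; case: ltnP => jK.
    by case: asboolP => _; case: ifP.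
  have sj : s <= tau j by rewrite (le_trans sK) // tau_le.
  case: asboolP => [[r [/andP[jr _] [rs _]]]|_].
    by have := lt_trans (le_lt_trans sj jr) rs; rewrite ltxx.
  case: ifP => // /and3P[_ js _].
  by have := lt_trans (le_lt_trans sj (h j)) js; rewrite ltxx.
apply: (@leq_trans (\sum_(j < n) (if (j < K)%N then 3 else 0))%N).
  by apply: leq_sum => j _; exact: term.
suff : (\sum_(j < n) (if (j < K)%N then 3 else 0) <= 3 * minn n K)%N.
  by move=> H; apply: (leq_trans H); rewrite leq_mul2l geq_minr orbT.
elim: n => [|n IH]; first by rewrite big_ord0.
rewrite big_ord_recr /=; case: ltnP => nK.
  rewrite (minn_idPl (ltnW nK)) in IH; by rewrite (minn_idPl nK) mulnS addnC leq_add2l.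
rewrite (minn_idPr nK) in IH; by rewrite (minn_idPr (leqW nK)) addn0.
Qed.

Lemma Lambda_ge0 (R : realType) N (tau : nat -> R) s t : (0 <= Lambda N tau s t)%E.
Proof.
apply: (@le_trans _ _ ((crossings N tau 0 s t)%:R / (2 * N%:R))%:E).
  by rewrite lee_fin divr_ge0 // mulr_ge0.
by apply: ereal_sup_ubound; exists 0%N.
Qed.

Lemma Lambda_le (R : realType) N (tau : nat -> R) s t K : (0 < N)%N ->
  (forall k, tau k < tau k.+1) -> s <= tau K ->
  (Lambda N tau s t <= ((3 * K)%:R / (2 * N%:R))%:E)%E.
Proof.
move=> N0 h sK; apply: ge_ereal_sup => _ [n _ <-].
rewrite lee_fin ler_wpM2r // ?invr_ge0 ?mulr_ge0 // ler_nat.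
exact: crossings_le.
Qed.

Lemma my_le_integral d (T : measurableType d) (R : realType)
  (mu : {measure set T -> \bar R}) (D : set T) (f g : T -> \bar R) :
  (forall x, D x -> (0 <= f x)%E) -> (forall x, D x -> (f x <= g x)%E) ->
  (\int[mu]_(x in D) f x <= \int[mu]_(x in D) g x)%E.
Proof.
move=> f0 fg.
have g0 : forall x, D x -> (0 <= g x)%E by move=> x Dx; exact: le_trans (f0 _ Dx) (fg _ Dx).
rewrite !ge0_integralE //; apply: ereal_sup_le => _ [h hf <-]; exists h => // x.
apply: le_trans (hf x) _; rewrite /patch; case: ifP => // /[!inE] Dx.
exact: fg.
Qed.

Lemma seg_len (R : realType) N (sigma gamma : R) (tau : nat -> R) (e : R) k :
  (0 < N)%N -> 0 <= gamma -> (forall k, tau k < tau k.+1) ->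
  (\int[lebesgue_measure]_(s in `[tau k, tau k.+1])
             up_rate N sigma gamma tau k s = e%:E)%E ->
  e <= (N%:R ^+ 2 * sigma ^+ 2 + 6 * gamma) * (k.+1)%:R * (tau k.+1 - tau k).
Proof.
move=> N0 g0 h He.
pose c := N%:R ^+ 2 * sigma ^+ 2 + 4 * gamma * N%:R * ((3 * k.+1)%:R / (2 * N%:R)).
have : (e%:E <= \int[lebesgue_measure]_(s in `[tau k, tau k.+1]) (cst c%:E) s)%E.
  rewrite -He; apply: my_le_integral => s Ds.
    rewrite /up_rate; apply: adde_ge0; first by rewrite lee_fin mulr_ge0 // sqr_ge0.
    by apply: mule_ge0; [rewrite lee_fin !mulr_ge0 | exact: Lambda_ge0].
  rewrite /up_rate /= /c EFinD leeD2l // [in leRHS]EFinM.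
  apply: lee_wpmul2l; first by rewrite lee_fin !mulr_ge0.
  apply: Lambda_le => //; move: Ds; rewrite /= in_itv /= => /andP[_]; by [].
rewrite integral_cst //= lebesgue_measure_itv /= lte_fin (h k) -EFinD -EFinM lee_fin.
move=> /le_trans; apply; apply: ler_wpM2r; first by rewrite subr_ge0 ltW.
have N0' : (N%:R : R) != 0 by rewrite pnatr_eq0 -lt0n.
rewrite /c natrM.
have -> : 4 * gamma * N%:R * ((3%:R * k.+1%:R) / (2 * N%:R)) = 6 * gamma * (k.+1%:R : R).
  by field.
have K1 : 1 <= (k.+1%:R : R) by rewrite ler1n.
have P0 : 0 <= (N%:R ^+ 2 * sigma ^+ 2 : R) by rewrite mulr_ge0 // sqr_ge0.
by rewrite [leRHS]mulrDl lerD2r ler_peMr.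
Qed.

Lemma S_time_cvg (R : realType) N (tau : nat -> R) : (0 < N)%N ->
  (forall k, tau k < tau k.+1) -> (forall M, exists K, M < tau K) ->
  S_time N tau x @[x --> +oo] --> +oo%E.
Proof.
move=> N0 h hM; apply/cvgeyPge => M.
have [K MK] := hM M.
near=> x.
have x2K : (2 * K.+1)%:R <= x by near: x; apply: nbhs_pinfty_ge; rewrite num_real.
apply: le_ereal_inf_tmp => _ [s [s0 Hs] <-]; rewrite lee_fin leNgt; apply/negP => sM.
have := Lambda_le 0 N0 h (ltW (lt_trans sM MK)).
move=> /(le_trans Hs); rewrite lee_fin.
set F := (Num.floor (N%:R * x))%:~R.
have Nn : (0 < N%:R :> R) by rewrite ltr0n.
have HF : (2 * K.+1)%:R <= F.
  have -> : ((2 * K.+1)%:R : R) = ((2 * K.+1)%:Z)%:~R by rewrite -[LHS]pmulrn.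
  rewrite /F ler_int floor_ge_int (le_trans x2K) // ler_peMl //.
  by rewrite ler1n.
rewrite invfM mulrA ler_pM2r ?invr_gt0 // => HF2.
have : (2 * K.+1)%:R <= (3 * K)%:R / 2 :> R by exact: le_trans HF HF2.
have K0 : (0 : R) <= K%:R by [].
rewrite !natrM -addn1 natrD; lra.
Unshelve. all: by end_near.
Qed.
Lemma prod_le1 (R : realType) (f : nat -> \bar R) n :
  (forall i, (0 <= f i <= 1)%E) -> (0 <= \prod_(i < n) f i <= 1)%E.
Proof.
move=> hf; elim: n => [|n /andP[IH0 IH1]]; first by rewrite big_ord0 lexx lee01.
have /andP[f0 f1] := hf n.
rewrite big_ord_recr /= mule_ge0 //=.
by rewrite -[leRHS](mule1 1%E) lee_pmul.
Qed.

Lemma prod_half (R : realType) (f : nat -> \bar R) lo L :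
  ~~ odd lo -> (forall i, (0 <= f i <= 1)%E) ->
  (forall i, ~~ odd i -> (lo <= i)%N -> (f i <= (2^-1)%:E)%E) ->
  (\prod_(i < lo + 2 * L) f i <= ((2^-1) ^+ L)%:E)%E.
Proof.
move=> elo hf hh; elim: L => [|L IH].
  by rewrite muln0 addn0 expr0; have /andP[] := prod_le1 lo hf.
have -> : (lo + 2 * L.+1 = (lo + 2 * L).+2)%N by lia.
rewrite !big_ord_recr /=.
have /andP[f0 _] := hf (lo + 2 * L)%N.
have /andP[g0 g1] := hf (lo + 2 * L).+1.
have /andP[p0 _] := prod_le1 (lo + 2 * L) hf.
rewrite exprSr EFinM -[leRHS]mule1 lee_pmul // ?mule_ge0 // lee_pmul //.
apply: hh; last by rewrite leq_addr.
by rewrite oddD (negbTE elo) oddM.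
Qed.

Definition Bfun (R : realType) (lo : nat) : nat -> set R := fun idx =>
  if ~~ odd idx && (lo <= idx)%N then [set` `]-oo, 2^-1]%R] else setT.

Lemma preim_meas (R : realType) d (T : measurableType d) (X : T -> R) (Y : set R) :
  measurable_fun setT X -> measurable Y -> measurable (X @^-1` Y).
Proof. by move=> mX mY; have := mX measurableT _ mY; rewrite setTI. Qed.

Lemma block_prob (R : realType) d (T : measurableType d) (P : probability T R)
    (E : nat -> T -> R) lo L :
  (forall k, measurable_fun setT (E k)) ->
  (forall k (a : R), 0 <= a -> P [set w | a < E k w] = (expR (- a))%:E) ->
  indep_seq P E -> ~~ odd lo ->
  (P (\bigcap_(i in `I_(lo + 2 * L)) (E i @^-1` @Bfun R lo i)) <= ((2^-1) ^+ L)%:E)%E.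
Proof.
move=> mE hE hI elo.
have mB : forall i, measurable (@Bfun R lo i).
  by move=> i; rewrite /Bfun; case: ifP => _ //; exact: measurable_itv.
rewrite hI //; apply: (@prod_half _ (fun i => P (E i @^-1` @Bfun R lo i))) => // i.
  by rewrite measure_ge0 /= probability_le1 //; exact: preim_meas.
move=> ei loi; rewrite /Bfun ei loi /=.
have -> : E i @^-1` [set` `]-oo, 2^-1]%R] = ~` [set w | 2^-1 < E i w].
  by apply/seteqP; split => w /=; rewrite in_itv /= leNgt => /negP.
rewrite probability_setC; last first.
  have -> : [set w | 2^-1 < E i w] = E i @^-1` [set` `]2^-1, +oo[%R].
    by apply/seteqP; split => w /=; rewrite in_itv /= andbT.
  by apply: preim_meas => //; exact: measurable_itv.
rewrite hE ?invr_ge0 // -EFinB lee_fin.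
have := expR_ge1Dx (- 2^-1 : R); lra.
Qed.

Definition ell (i : nat) : nat := (2 * i + 2)%N.
Fixpoint base (i : nat) : nat :=
  match i with 0 => 0%N | i'.+1 => (base i' + 2 ^ i' * (2 * ell i'))%N end.
Definition lo (i j : nat) : nat := (base i + j * (2 * ell i))%N.

Definition Bset (R : realType) d (T : measurableType d) (E : nat -> T -> R) (i j : nat) : set T :=
  \bigcap_(k in `I_(lo i j + 2 * ell i)) (E k @^-1` @Bfun R (lo i j) k).

Definition Bad (R : realType) d (T : measurableType d) (E : nat -> T -> R) (i : nat) : set T :=
  \big[setU/set0]_(j < 2 ^ i) Bset E i j.

Lemma lo_even i j : ~~ odd (lo i j).
Proof.
have H : forall a b, ~~ odd (a * (2 * b)) by move=> a b; rewrite mulnCA oddM.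
rewrite /lo oddD (negbTE (H _ _)) addbF.
elim: i => [|i IH] //=; by rewrite oddD (negbTE IH) (negbTE (H _ _)).
Qed.

Lemma Bset_meas (R : realType) d (T : measurableType d) (E : nat -> T -> R) i j :
  (forall k, measurable_fun setT (E k)) -> measurable (Bset E i j).
Proof.
move=> mE; apply: bigcap_measurableType => k _; apply: preim_meas => //.
by rewrite /Bfun; case: ifP => _ //; exact: measurable_itv.
Qed.

Lemma Bad_meas (R : realType) d (T : measurableType d) (E : nat -> T -> R) i :
  (forall k, measurable_fun setT (E k)) -> measurable (Bad E i).
Proof. by move=> mE; apply: bigsetU_measurable => j _; exact: Bset_meas. Qed.

Lemma half_arith (R : realType) (i : nat) :
  (2^-1 : R) ^+ (2 * i + 2) *+ 2 ^ i <= 2^-1 ^+ i.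
Proof.
have -> : (2 * i + 2 = i + (i + 2))%N by lia.
rewrite -mulr_natl natrX exprD mulrA -exprMn mulfV // expr1n mul1r exprD.
by rewrite ler_piMr ?exprn_ge0 ?invr_ge0 // exprn_ile1 ?invr_ge0 ?invf_le1 ?ler1n.
Qed.

Lemma Bad_prob (R : realType) d (T : measurableType d) (P : probability T R)
    (E : nat -> T -> R) i :
  (forall k, measurable_fun setT (E k)) ->
  (forall k (a : R), 0 <= a -> P [set w | a < E k w] = (expR (- a))%:E) ->
  indep_seq P E -> (P (Bad E i) <= ((2^-1) ^+ i)%:E)%E.
Proof.
move=> mE hE hI.
apply: le_trans.
  apply: (@content_subadditive _ _ _ P _ (fun j => Bset E i j) (2 ^ i)%N).
  - by move=> k _; exact: Bset_meas.
  - exact: Bad_meas.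
  - by [].
apply: (@le_trans _ _ (\sum_(k < 2 ^ i) ((2^-1 : R) ^+ ell i)%:E)%E).
  apply: lee_sum => j _.
  exact: block_prob (lo_even i j).
by rewrite sumEFin lee_fin sumr_const card_ord /ell; exact: half_arith.
Qed.

Lemma geo_fin (R : realType) : (\sum_(n <oo) ((2^-1 : R) ^+ n)%:E < +oo)%E.
Proof.
apply: (@le_lt_trans _ _ 2%:E); last exact: ltey.
apply: lime_le.
  by apply: is_cvg_nneseries => n _ _; rewrite lee_fin exprn_ge0 // invr_ge0.
apply: nearW => n /=; rewrite sumEFin lee_fin.
have h0 : (0 : R) < 2^-1 by rewrite invr_gt0.
have h1 : `|(2^-1 : R)| < 1 by rewrite gtr0_norm // invf_lt1 // ltr1n.
have := @geometric_le_lim R n 1 2^-1 ler01 h0 h1.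
rewrite /series /= (_ : (1 : R) / (1 - 2^-1) = 2); last by field.
by under eq_bigr do rewrite mul1r.
Qed.

Lemma BC (R : realType) d (T : measurableType d) (P : probability T R)
    (E : nat -> T -> R) :
  (forall k, measurable_fun setT (E k)) ->
  (forall k (a : R), 0 <= a -> P [set w | a < E k w] = (expR (- a))%:E) ->
  indep_seq P E -> P (lim_sup_set (Bad E)) = 0%E.
Proof.
move=> mE hE hI; apply: lim_sup_set_cvg0.
  by move=> k; exact: Bad_meas.
apply: le_lt_trans (geo_fin R).
apply: lee_nneseries => n _; first by move=> _; exact: measure_ge0.
exact: Bad_prob.
Qed.
Lemma not_Bset (R : realType) d (T : measurableType d) (E : nat -> T -> R) i j w :
  ~ Bset E i j w -> exists k, [/\ (lo i j <= k)%N, (k < lo i j + 2 * ell i)%N,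
     ~~ odd k & 2^-1 < E k w].
Proof.
move=> nB; apply: contrapT => nex; apply: nB => k /= kn; rewrite /Bfun.
case: ifP => // /andP[ek lok]; rewrite /= in_itv /= leNgt; apply/negP => hk.
by apply: nex; exists k; split.
Qed.

Lemma block_growth (R : realType) N (sigma theta gamma : R) (e tau : nat -> R)
    l h k : (0 < N)%N -> 0 <= gamma -> contour_dyn N sigma theta gamma e tau ->
  (l <= k)%N -> (k < h)%N -> ~~ odd k -> 2^-1 < e k ->
  2^-1 <= (N%:R ^+ 2 * sigma ^+ 2 + 6 * gamma) * h%:R * (tau h - tau l).
Proof.
move=> N0 g0 cd lk kh ek hek; have [t0 ht heven _] := cd.
have := seg_len N0 g0 ht (heven k ek).
set A := (N%:R ^+ 2 * sigma ^+ 2 + 6 * gamma).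
have A0 : 0 <= A by rewrite /A; apply: addr_ge0; [apply: mulr_ge0; exact: sqr_ge0 | exact: mulr_ge0].
move=> hle; apply: (le_trans (ltW hek)); apply: (le_trans hle).
apply: ler_pM.
- by rewrite mulr_ge0.
- by rewrite subr_ge0 ltW.
- by rewrite ler_wpM2l // ler_nat.
- by rewrite lerB // tau_le.
Qed.

Lemma step_sum (R : realType) (g : nat -> R) (c : R) n :
  (forall j, (j < n)%N -> c <= g j.+1 - g j) -> n%:R * c <= g n - g 0%N.
Proof.
elim: n => [|n IH] H; first by rewrite mul0r subrr.
have := H n (ltnSn n); have := IH (fun j jn => H j (ltnW jn)).
rewrite -addn1 natrD mulrDl mul1r; lra.
Qed.

Lemma base_le i : (base i <= 4 * i * 2 ^ i)%N.
Proof.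
elim: i => [|i IH] //=; rewrite /ell expnS.
move: IH; set x := (2 ^ i)%N; nia.
Qed.

Lemma base_gt i : (0 < base i.+1)%N.
Proof. by rewrite /= addn_gt0 muln_gt0 expn_gt0 /ell; lia. Qed.

Lemma level_growth (R : realType) N (sigma theta gamma : R) (e tau : nat -> R) i :
  (0 < N)%N -> 0 < sigma -> 0 <= gamma -> contour_dyn N sigma theta gamma e tau ->
  (forall j, (j < 2 ^ i)%N -> exists k, [/\ (lo i j <= k)%N,
     (k < lo i j + 2 * ell i)%N, ~~ odd k & 2^-1 < e k]) ->
  1 / (16 * (N%:R ^+ 2 * sigma ^+ 2 + 6 * gamma) * (i.+1)%:R)
    <= tau (base i.+1) - tau (base i).
Proof.
move=> N0 s0 g0 cd hj.
have [t0 ht _ _] := cd.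
set A := (N%:R ^+ 2 * sigma ^+ 2 + 6 * gamma).
have A0 : 0 < A.
  have h1 : 0 < N%:R ^+ 2 * sigma ^+ 2 :> R by rewrite mulr_gt0 // exprn_gt0 // ltr0n.
  have h2 : 0 <= 6 * gamma by rewrite mulr_ge0.
  rewrite /A; lra.
set B := ((base i.+1)%:R : R).
have B0 : 0 < B by rewrite ltr0n base_gt.
set c := 1 / (2 * A * B).
have hc : forall j, (j < 2 ^ i)%N -> c <= tau (lo i j.+1) - tau (lo i j).
  move=> j jn; have [k [lok kh ek hek]] := hj j jn.
  have := block_growth N0 g0 cd lok kh ek hek.
  have -> : (lo i j + 2 * ell i = lo i j.+1)%N by rewrite /lo mulSn; lia.
  have hB : ((lo i j.+1)%:R : R) <= B.
    by rewrite ler_nat /lo /= leq_add2l leq_mul2r jn orbT.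
  have D0 : 0 <= tau (lo i j.+1) - tau (lo i j) by rewrite subr_ge0 tau_le // /lo leq_add2l leq_mul2r leqnSn orbT.
  move=> H.
  have H2 : 2^-1 <= A * B * (tau (lo i j.+1) - tau (lo i j)).
    apply: (le_trans H); apply: ler_wpM2r => //; apply: ler_wpM2l => //; exact: ltW.
  rewrite /c ler_pdivrMr ?mulr_gt0 //; lra.
have := step_sum hc.
have -> : lo i 0 = base i by rewrite /lo mul0n addn0.
have -> : lo i (2 ^ i) = base i.+1 by [].
apply: le_trans.
set X := ((2 ^ i)%:R : R).
have X0 : 0 < X by rewrite ltr0n expn_gt0.
have hBX : B <= 8 * (i.+1)%:R * X.
  rewrite /B /X (le_trans (_ : _ <= (4 * i.+1 * 2 ^ i.+1)%:R)) ?ler_nat ?base_le //.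
  by rewrite expnS !natrM natrX; lra.
have I0 : (0 : R) < (i.+1)%:R by rewrite ltr0n.
rewrite /c ler_pdivrMr ?mulr_gt0 //.
have -> : X * (1 / (2 * A * B)) * (16 * A * (i.+1)%:R) = (X * (16 * A * (i.+1)%:R)) / (2 * A * B).
  by rewrite mul1r mulrAC.
rewrite ler_pdivlMr ?mulr_gt0 // mul1r.
nra.
Qed.

Lemma doubling (R : realType) (A : R) (tau : nat -> R) n :
  0 < A -> (0 < n)%N ->
  (forall i, (n <= i)%N -> 1 / (16 * A * (i.+1)%:R) <= tau (base i.+1) - tau (base i)) ->
  forall m, m%:R * (1 / (32 * A)) <= tau (base (n * 2 ^ m)) - tau (base n).
Proof.
move=> A0 n0 hL; elim => [|m IH]; first by rewrite expn0 muln1 subrr mul0r.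
set a := (n * 2 ^ m)%N.
have a0 : (0 < a)%N by rewrite muln_gt0 n0 expn_gt0.
have -> : (n * 2 ^ m.+1 = a + a)%N by rewrite /a expnS; lia.
pose c := 1 / (16 * A * (2 * a)%:R).
have hc : forall t, (t < a)%N -> c <= tau (base (a + t).+1) - tau (base (a + t)).
  move=> t ta; apply: le_trans (hL _ _); last first.
    by rewrite (leq_trans _ (leq_addr _ _)) // /a leq_pmulr // expn_gt0.
  rewrite /c !div1r lef_pV2 ?posrE ?mulr_gt0 ?ltr0n //; last by lia.
  apply: ler_wpM2l; first by rewrite mulr_ge0 // ltW.
  by rewrite ler_nat; lia.
have := step_sum (g := fun t => tau (base (a + t))) (c := c) (n := a).
rewrite addn0 => /(_ (fun t ta => eq_ind _ (fun z => c <= tau (base z) - _) (hc t ta) _ (esym (addnS a t)))) Hs.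
have -> : m.+1%:R * (1 / (32 * A)) = m%:R * (1 / (32 * A)) + a%:R * c.
  rewrite /c natrM; field.
  by rewrite pnatr_eq0 -lt0n a0 /= gt_eqF.
move: IH; rewrite -/a; lra.
Qed.

Theorem lemma4 (R : realType) (N : nat) (sigma theta gamma : R)
    (d : measure_display) (T : measurableType d) (P : probability T R)
    (E : nat -> T -> R) :
  (0 < N)%N -> 0 < sigma -> 0 <= theta -> 0 <= gamma ->
  (forall k, measurable_fun setT (E k)) ->
  (forall k (a : R), 0 <= a -> P [set w | a < E k w] = (expR (- a))%:E) ->
  indep_seq P E ->
  {ae P, forall w, forall tau : nat -> R,
      contour_dyn N sigma theta gamma (fun k => E k w) tau ->
      S_time N tau x @[x --> +oo] --> +oo%E}.
Proof.
move=> N0 s0 th0 g0 mE hE hI.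
exists (lim_sup_set (Bad E)); split.
- apply: bigcapT_measurable => n; apply: bigcup_measurable => k _.
  exact: Bad_meas.
- exact: BC.
move=> w /= Hw; apply: contrapT => nL; apply: Hw => tau cd.
have [n0 hn0] : exists n0, forall i, (n0 <= i)%N -> ~ Bad E i w.
  apply: contrapT => H; apply: nL => n; apply: contrapT => H2; apply: H.
  by exists n => i ni Bi; apply: H2; exists i.
have [t0 ht _ _] := cd.
apply: S_time_cvg => // M.
set A := (N%:R ^+ 2 * sigma ^+ 2 + 6 * gamma).
have A0 : 0 < A.
  have h1 : 0 < N%:R ^+ 2 * sigma ^+ 2 :> R by rewrite mulr_gt0 // exprn_gt0 // ltr0n.
  have h2 : 0 <= 6 * gamma by rewrite mulr_ge0.
  rewrite /A; lra.
have hL : forall i, (n0.+1 <= i)%N ->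
    1 / (16 * A * (i.+1)%:R) <= tau (base i.+1) - tau (base i).
  move=> i ni; apply: (level_growth (theta := theta) (e := fun k => E k w)) => // j jn.
  apply: not_Bset => Bj; apply: (hn0 i (ltnW ni)).
  by rewrite /Bad -bigcup_mkord; exists j.
have := doubling A0 (ltn0Sn n0) hL.
set m := (Num.trunc (M * (32 * A))).+1.
move=> /(_ m) Hm; exists (base (n0.+1 * 2 ^ m)).
have tb0 : 0 <= tau (base n0.+1) by rewrite -t0 tau_le.
have Hm2 : M < m%:R * (1 / (32 * A)).
  rewrite mul1r ltr_pdivlMr ?mulr_gt0 //; exact: truncnS_gt.
lra.
Qed.
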